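(* Let $k,k_1,\dots,k_N\in\mathbb{R}^3$, $t,t_1,\dots,t_N\in\mathbb{R}$, $\varepsilon_1,\dots,\varepsilon_N\in\{0,1\}$, and write $a^{0}_\lambda=a_\lambda$, $a^{1}_\lambda=a^{\dagger}_\lambda$. Let $m_1<\dots<m_J$ be the positions $m$ with $\varepsilon_m=0$ (annihilators) and $m'_1<\dots<m'_I$ the positions with $\varepsilon_m=1$ (creators), $I+J=N$. Then $$ a_\lambda(t,k)\,a^{\varepsilon_1}_\lambda(t_1,k_1)\cdots a^{\varepsilon_N}_\lambda(t_N,k_N) -\prod_{i=1}^{J} q_{\lambda}^{-1}(t-t_{m_i},k\cdot k_{m_i})\prod_{j=1}^{I} q_{\lambda}(t-t_{m'_j},k\cdot k_{m'_j})\, a^{\varepsilon_1}_\lambda(t_1,k_1)\cdots a^{\varepsilon_N}_\lambda(t_N,k_N)\,a_\lambda(t,k) $$ $$ =\sum_{j=1}^{I}\delta(k-k_{m'_j})\,\frac{1}{\lambda^2}\,q_{\lambda}\big(t-t_{m'_j},\tilde\omega(k)+k\cdot p\big)\prod_{m_i<m'_j}q_{\lambda}(t-t_{m'_j},k\cdot k_{m_i})\prod_{m'_i<m'_j}q^{-1}_{\lambda}(t-t_{m'_j},k\cdot k_{m'_i}) $$ $$ \times\prod_{m_i<m'_j}q_{\lambda}^{-1}(t-t_{m_i},k\cdot k_{m_i})\prod_{m'_i<m'_j}q_{\lambda}(t-t_{m'_i},k\cdot k_{m'_i})\; a^{\varepsilon_1}_\lambda(t_1,k_1)\cdots\widehat{a^{\dagger}_\lambda(t_{m'_j},k_{m'_j})}\cdots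 a^{\varepsilon_N}_\lambda(t_N,k_N), $$ where the hat means that the factor $a^{\dagger}_\lambda(t_{m'_j},k_{m'_j})$ is omitted from the product, and the operator-valued factors depending on $p$ stand to the left of the product of field operators.
   Context: A single non-relativistic particle in $\mathbb{R}^3$ has position $q=(q_1,q_2,q_3)$ and momentum $p=(p_1,p_2,p_3)$ with $[q_j,p_n]=i\delta_{jn}$. A boson field is given by operators $a_j(k),a_j^\dagger(k)$, $j=1,2,3$, $k\in\mathbb{R}^3$, with $[a_j(k),a_n^\dagger(k')]=\delta_{jn}\delta(k-k')$, $[a_j(k),a_n(k')]=0$. Let $\omega(k)=|k|$, $\tilde\omega(k)=\omega(k)+\tfrac12 k^2$, $H_0=\int\omega(k)a^\dagger(k)a(k)\,d^3k+\tfrac12 p^2$, and $kq=\sum_j k_jq_j$, $k\cdot p=\sum_j k_jp_j$. For $\lambda>0$ define the rescaled (collective) field operators $$a_{\lambda}(t,k)=\frac{1}{\lambda}e^{i\frac{t}{\lambda^2}H_0}e^{-ikq}a(k)e^{-i\frac{t}{\lambda^2}H_0}=\frac{1}{\lambda}e^{-i\frac{t}{\lambda^2}(\tilde\omega(k)+k\cdot p)}e^{-ikq}a(k),$$ and $a^\dagger_\lambda(t,k)$ its adjoint, and $q_\lambda(t,x)=e^{-i\frac{t}{\lambda^2}x}$ (where $x$ may be a function of the operator $p$). Polarization indices are suppressed: each field operator carries an index $j\in\{1,2,3\}$ and each $\delta(k-k')$ pairing an annihilator with index $j$ and a creator with index $n$ stands for $\delta(k-k')\delta_{jn}$. *)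

(* Defs.v *)
From HB Require Import structures.
From mathcomp Require Import all_boot all_order all_algebra.
From mathcomp Require Import complex.
From mathcomp Require Import reals trigo.
Set Implicit Arguments. Unset Strict Implicit. Unset Printing Implicit Defensive.
Import Order.TTheory GRing.Theory Num.Theory.
Local Open Scope ring_scope.

Definition vec (R : realType) := 'rV[R]_3.

Definition dotv (R : realType) (k k' : vec R) : R := \sum_(i < 3) k 0 i * k' 0 i.

Definition omega (R : realType) (k : vec R) : R := Num.sqrt (dotv k k).
Definition omt (R : realType) (k : vec R) : R := omega k + dotv k k / 2.

Definition cR (R : realType) (x : R) : R[i] := Complex x 0.
Definition expi (R : realType) (th : R) : R[i] := Complex (cos th) (sin th).

Definition ql (R : realType) (lam t x : R) : R[i] := expi (- (t / lam ^+ 2 * x)).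
Definition qlinv (R : realType) (lam t x : R) : R[i] := expi (t / lam ^+ 2 * x).

(* Algebraic model of the particle + boson field operator algebra.
   A is a complex (associative, unital) algebra;
   Q k   stands for  e^{-ikq},
   F f   stands for  f(p)  (functional calculus of the momentum p),
   a j k, ad j k stand for a_j(k), a_j^dagger(k),
   D k k' stands for the (scalar) distribution delta(k-k'). *)
Record ccr_model (R : realType) (A : algType R[i])
    (Q : vec R -> A) (F : (vec R -> R[i]) -> A)
    (a ad : 'I_3 -> vec R -> A) (D : vec R -> vec R -> A) : Prop := CCRModel {
  Q0 : Q 0 = 1;
  QD : forall k k', Q (k + k') = Q k * Q k';
  Fcst : forall c : R[i], F (fun _ => c) = c%:A;
  FM : forall f g, F (fun p => f p * g p) = F f * F g;
  (* e^{-ikq} f(p) = f(p + k) e^{-ikq}   (from [q_j, p_n] = i delta_jn) *)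
  QF : forall k f, Q k * F f = F (fun p => f (p + k)) * Q k;
  aQ : forall j k k', a j k * Q k' = Q k' * a j k;
  adQ : forall j k k', ad j k * Q k' = Q k' * ad j k;
  aF : forall j k f, a j k * F f = F f * a j k;
  adF : forall j k f, ad j k * F f = F f * ad j k;
  aa : forall j n k k', a j k * a n k' = a n k' * a j k;
  adad : forall j n k k', ad j k * ad n k' = ad n k' * ad j k;
  aad : forall j n k k',
      a j k * ad n k' - ad n k' * a j k = (j == n)%:R * D k k';
  Dcentral : forall k k' x, D k k' * x = x * D k k';
  Dsupp : forall k k', k <> k' -> D k k' = 0
}.

Section Fields.
Variables (R : realType) (A : algType R[i]) (Q : vec R -> A)
  (F : (vec R -> R[i]) -> A) (a ad : 'I_3 -> vec R -> A).

Definition alam (lam t : R) (k : vec R) (j : 'I_3) : A :=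
  (cR lam^-1)%:A * F (fun p => ql lam t (omt k + dotv k p)) * Q k * a j k.

Definition adlam (lam t : R) (k : vec R) (j : 'I_3) : A :=
  (cR lam^-1)%:A * ad j k * Q (- k) * F (fun p => qlinv lam t (omt k + dotv k p)).

Definition aeps (e : bool) (lam t : R) (k : vec R) (j : 'I_3) : A :=
  if e then adlam lam t k j else alam lam t k j.
End Fields.

(* Main.v *)
Require Import Defs.
From HB Require Import structures.
From mathcomp Require Import all_boot all_order all_algebra.
From mathcomp Require Import complex.
From mathcomp Require Import reals trigo.
From mathcomp Require Import ring.
From Stdlib Require Import FunctionalExtensionality.
Import Order.TTheory GRing.Theory Num.Theory.
Local Open Scope ring_scope.

Module Helpers.
Set Implicit Arguments. Unset Strict Implicit.


Lemma expiD (R : realType) (x y : R) : expi x * expi y = expi (x + y).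
Proof. rewrite /expi cosD sinD /=; congr Complex; ring. Qed.

Lemma expi0 (R : realType) : expi (0 : R) = 1.
Proof. by rewrite /expi cos0 sin0. Qed.

Lemma expiE (R : realType) (x y : R) : x = y -> expi x = expi y.
Proof. by move->. Qed.

Lemma dotvD (R : realType) (k p q : vec R) : dotv k (p + q) = dotv k p + dotv k q.
Proof. rewrite /dotv -big_split; apply: eq_bigr => i _; by rewrite mxE mulrDr. Qed.

Lemma dotvN (R : realType) (k p : vec R) : dotv k (- p) = - dotv k p.
Proof. rewrite /dotv -sumrN; apply: eq_bigr => i _; by rewrite mxE mulrN. Qed.

Lemma dotvC (R : realType) (k p : vec R) : dotv k p = dotv p k.
Proof. rewrite /dotv; apply: eq_bigr => i _; by rewrite mulrC. Qed.

Lemma cR2 (R : realType) (lam : R) : cR lam^-1 * cR lam^-1 = cR (lam ^+ 2)^-1.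
Proof. rewrite /cR /=; congr Complex; first by rewrite mulr0 subr0 -exprVn expr2. by rewrite mulr0 mul0r addr0. Qed.


Definition gf (R : realType) (lam t : R) (k : vec R) := fun p => ql lam t (omt k + dotv k p).
Definition hf (R : realType) (lam t : R) (k : vec R) := fun p => qlinv lam t (omt k + dotv k p).

Lemma Fscal (R : realType) (A : algType R[i]) (Q : vec R -> A)
  (F : (vec R -> R[i]) -> A) (a ad : 'I_3 -> vec R -> A)
  (D : vec R -> vec R -> A) (HA : ccr_model Q F a ad D) c f :
  F (fun p => c * f p) = c%:A * F f.
Proof. by rewrite (FM HA (fun _ => c) f) (Fcst HA). Qed.

Lemma Fext (R : realType) (A : algType R[i]) (F : (vec R -> R[i]) -> A) f g :
  (forall p, f p = g p) -> F f = F g.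
Proof. by move=> H; rewrite (functional_extensionality _ _ H). Qed.

Lemma FC (R : realType) (A : algType R[i]) (Q : vec R -> A)
  (F : (vec R -> R[i]) -> A) (a ad : 'I_3 -> vec R -> A)
  (D : vec R -> vec R -> A) (HA : ccr_model Q F a ad D) f g :
  F f * F g = F g * F f.
Proof. rewrite -!(FM HA); apply: Fext => p; exact: mulrC. Qed.

Lemma alamE (R : realType) (A : algType R[i]) (Q : vec R -> A)
  (F : (vec R -> R[i]) -> A) (a : 'I_3 -> vec R -> A) lam t k j :
  alam Q F a lam t k j = cR lam^-1 *: (F (gf lam t k) * (Q k * a j k)).
Proof. by rewrite /alam -!mulrA mulr_algl. Qed.

Lemma adlamE (R : realType) (A : algType R[i]) (Q : vec R -> A)
  (F : (vec R -> R[i]) -> A) (ad : 'I_3 -> vec R -> A) lam t k j :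
  adlam Q F ad lam t k j = cR lam^-1 *: (ad j k * (Q (- k) * F (hf lam t k))).
Proof. by rewrite /adlam -!mulrA mulr_algl. Qed.

Lemma C3 (R : realType) (A : algType R[i]) (Q : vec R -> A)
  (F : (vec R -> R[i]) -> A) (a ad : 'I_3 -> vec R -> A)
  (D : vec R -> vec R -> A) (HA : ccr_model Q F a ad D) lam s k n f :
  alam Q F a lam s k n * F f = F (fun p => f (p + k)) * alam Q F a lam s k n.
Proof.
rewrite !alamE -scalerAl -scalerAr; congr (_ *: _).
rewrite -!mulrA (aF HA) [Q k * (F f * _)]mulrA (QF HA) !mulrA; congr (_ * _).
by rewrite (FC HA).
Qed.

Lemma C4 (R : realType) (A : algType R[i]) (Q : vec R -> A)
  (F : (vec R -> R[i]) -> A) (a ad : 'I_3 -> vec R -> A)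
  (D : vec R -> vec R -> A) (HA : ccr_model Q F a ad D) lam s k n f :
  adlam Q F ad lam s k n * F f = F (fun p => f (p - k)) * adlam Q F ad lam s k n.
Proof.
rewrite !adlamE -scalerAl -scalerAr; congr (_ *: _).
rewrite -!mulrA (FC HA (hf lam s k)) !mulrA -(adF HA); congr (_ * _).
by rewrite -!mulrA (QF HA).
Qed.

Lemma gshift (R : realType) (lam t : R) k p x :
  gf lam t k (p + x) = ql lam t (dotv k x) * gf lam t k p.
Proof. rewrite /gf /ql dotvD expiD; apply: expiE; ring. Qed.

Lemma hshift (R : realType) (lam t : R) k p x :
  hf lam t k (p + x) = qlinv lam t (dotv k x) * hf lam t k p.
Proof. rewrite /hf /qlinv dotvD expiD; apply: expiE; ring. Qed.

Lemma NA (R : realType) (A : algType R[i]) (Q : vec R -> A)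
  (F : (vec R -> R[i]) -> A) (a ad : 'I_3 -> vec R -> A)
  (D : vec R -> vec R -> A) (HA : ccr_model Q F a ad D) f f' k k' j n :
  (F f * (Q k * a j k)) * (F f' * (Q k' * a n k')) =
  F (fun p => f p * f' (p + k)) * (Q (k + k') * (a j k * a n k')).
Proof.
rewrite -!mulrA [a j k * (F f' * _)]mulrA (aF HA) -mulrA.
rewrite [a j k * (Q k' * _)]mulrA (aQ HA) -mulrA.
rewrite [Q k * (F f' * _)]mulrA (QF HA) -mulrA.
by rewrite [Q k * (Q k' * _)]mulrA -(QD HA) mulrA -(FM HA).
Qed.

Lemma C1 (R : realType) (A : algType R[i]) (Q : vec R -> A)
  (F : (vec R -> R[i]) -> A) (a ad : 'I_3 -> vec R -> A)
  (D : vec R -> vec R -> A) (HA : ccr_model Q F a ad D) lam t s k k' j n :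
  alam Q F a lam t k j * alam Q F a lam s k' n =
  qlinv lam (t - s) (dotv k k') *: (alam Q F a lam s k' n * alam Q F a lam t k j).
Proof.
have H : forall p, gf lam t k p * gf lam s k' (p + k) =
   qlinv lam (t - s) (dotv k k') * (gf lam s k' p * gf lam t k (p + k')).
  move=> p; rewrite !gshift /gf /ql /qlinv !expiD; apply: expiE.
  rewrite (dotvC k' k); ring.
rewrite !alamE -!scalerAl -!scalerAr !(NA HA) (addrC k') (aa HA j n).
rewrite (Fext _ H) (Fscal HA) -mulrA mulr_algl !scalerA; congr (_ *: _).
by rewrite mulrC mulrA.
Qed.

Lemma NB1 (R : realType) (A : algType R[i]) (Q : vec R -> A)
  (F : (vec R -> R[i]) -> A) (a ad : 'I_3 -> vec R -> A)
  (D : vec R -> vec R -> A) (HA : ccr_model Q F a ad D) f h k k' j n :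
  F f * (Q k * ((ad n k' * a j k) * (Q (-k') * F h))) =
  F (fun p => f p * h (p + (k - k'))) * (Q (k - k') * (ad n k' * a j k)).
Proof.
have ZQ x : (ad n k' * a j k) * Q x = Q x * (ad n k' * a j k).
  by rewrite -mulrA (aQ HA) mulrA (adQ HA) -mulrA.
have ZF x : (ad n k' * a j k) * F x = F x * (ad n k' * a j k).
  by rewrite -mulrA (aF HA) mulrA (adF HA) -mulrA.
rewrite [_ * (Q (-k') * _)]mulrA ZQ -mulrA ZF.
rewrite [Q k * (Q _ * _)]mulrA -(QD HA) [Q _ * (F h * _)]mulrA (QF HA) -mulrA.
by rewrite mulrA -(FM HA).
Qed.

Lemma NB2 (R : realType) (A : algType R[i]) (Q : vec R -> A)
  (F : (vec R -> R[i]) -> A) (a ad : 'I_3 -> vec R -> A)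
  (D : vec R -> vec R -> A) (HA : ccr_model Q F a ad D) f h k k' j n :
  ad n k' * (Q (-k') * (F h * (F f * (Q k * a j k)))) =
  F (fun p => h (p - k') * f (p - k')) * (Q (k - k') * (ad n k' * a j k)).
Proof.
rewrite [F h * (F f * _)]mulrA -(FM HA).
rewrite [Q _ * (F _ * _)]mulrA (QF HA) -mulrA.
rewrite [Q _ * (Q k * _)]mulrA -(QD HA) (addrC (- k')).
rewrite mulrA (adF HA) -mulrA [ad n k' * (Q _ * _)]mulrA (adQ HA) -mulrA.
done.
Qed.

Lemma C2 (R : realType) (A : algType R[i]) (Q : vec R -> A)
  (F : (vec R -> R[i]) -> A) (a ad : 'I_3 -> vec R -> A)
  (D : vec R -> vec R -> A) (HA : ccr_model Q F a ad D) lam t s k k' j n :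
  alam Q F a lam t k j * adlam Q F ad lam s k' n =
  ql lam (t - s) (dotv k k') *: (adlam Q F ad lam s k' n * alam Q F a lam t k j)
  + D k k' * (j == n)%:R * (cR (lam ^+ 2)^-1)%:A * F (gf lam (t - s) k).
Proof.
have E : a j k * ad n k' = ad n k' * a j k + (j == n)%:R * D k k'.
  by rewrite -(aad HA) addrC subrK.
have H : forall p, gf lam t k p * hf lam s k' (p + (k - k')) =
   ql lam (t - s) (dotv k k') * (hf lam s k' (p - k') * gf lam t k (p - k')).
  move=> p; rewrite !gshift !hshift /gf /hf /ql /qlinv !expiD; apply: expiE.
  rewrite !dotvD !dotvN (dotvC k' k); ring.
rewrite !alamE !adlamE -!scalerAl -!scalerAr !scalerA cR2 -!mulrA.
rewrite [a j k * (ad n k' * _)]mulrA E mulrDl !mulrDr (NB1 HA) (NB2 HA).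
rewrite (Fext _ H) (Fscal HA) -mulrA mulr_algl scalerDr -scalerAl !scalerA cR2.
rewrite (mulrC (cR _)); congr (_ + _).
case: (eqVneq k k') => [<-|/eqP nk]; last first.
  by rewrite (Dsupp HA nk); rewrite ?(mulr0, mul0r, scaler0).
case: (j == n) => /=; last by rewrite ?(mulr0, mul0r, scaler0).
rewrite ?(mulr1n, mul1r, mulr1) (Dcentral HA) !mulrA.
rewrite -[F _ * Q k * Q _]mulrA -(QD HA) addrN (Q0 HA) mulr1 -(FM HA).
rewrite -scalerAl (Dcentral HA); congr (_ *: (_ * _)); apply: Fext => p.
rewrite /gf /hf /ql /qlinv !expiD; apply: expiE; ring.
Qed.

Lemma L1 (R : realType) (A : algType R[i]) (Q : vec R -> A)
  (F : (vec R -> R[i]) -> A) (a ad : 'I_3 -> vec R -> A)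
  (D : vec R -> vec R -> A) (HA : ccr_model Q F a ad D) lam t s k k' j n e :
  alam Q F a lam t k j * aeps Q F a ad e lam s k' n =
  (if e then ql lam (t - s) (dotv k k') else qlinv lam (t - s) (dotv k k'))
    *: (aeps Q F a ad e lam s k' n * alam Q F a lam t k j)
  + (if e then D k k' * (j == n)%:R * (cR (lam ^+ 2)^-1)%:A * F (gf lam (t - s) k)
     else 0).
Proof. by case: e; rewrite /aeps; [rewrite (C2 HA) | rewrite (C1 HA) addr0]. Qed.

Lemma L2 (R : realType) (A : algType R[i]) (Q : vec R -> A)
  (F : (vec R -> R[i]) -> A) (a ad : 'I_3 -> vec R -> A)
  (D : vec R -> vec R -> A) (HA : ccr_model Q F a ad D) lam u s k k' n e :
  aeps Q F a ad e lam s k' n * F (gf lam u k) =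
  (if e then qlinv lam u (dotv k k') else ql lam u (dotv k k'))%:A
    * F (gf lam u k) * aeps Q F a ad e lam s k' n.
Proof.
case: e; rewrite /aeps; [rewrite (C4 HA) | rewrite (C3 HA)]; rewrite -(Fscal HA); congr (F _ * _);
  apply: functional_extensionality => p; rewrite gshift //.
by rewrite dotvN /ql /qlinv mulrN opprK.
Qed.

Lemma bigrecl_cond (T : Type) (idx : T) (op : Monoid.law idx) n
  (P : pred 'I_n.+1) (G : 'I_n.+1 -> T) :
  \big[op/idx]_(i < n.+1 | P i) G i =
  op (if P ord0 then G ord0 else idx) (\big[op/idx]_(i < n | P (lift ord0 i)) G (lift ord0 i)).
Proof. by rewrite big_mkcond big_ord_recl -big_mkcond. Qed.

Lemma phiprod (R : comRingType) n (e : 'I_n -> bool) (u v : 'I_n -> R) :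
  (\prod_(m < n | ~~ e m) u m) * (\prod_(m < n | e m) v m) =
  \prod_(m < n) (if e m then v m else u m).
Proof.
rewrite big_mkcond [X in _ * X]big_mkcond -big_split; apply: eq_bigr => i _.
by case: (e i); rewrite /= ?mulr1 ?mul1r.
Qed.


Lemma step_alg (R : realType) (A : algType R[i]) (a0 X0 P S C : A) (phi Phi : R[i]) :
  a0 * P - Phi%:A * P * a0 = S ->
  a0 * X0 = phi *: (X0 * a0) + C ->
  a0 * (X0 * P) - (phi * Phi)%:A * (X0 * P) * a0 = C * P + phi *: (X0 * S).
Proof.
move=> /eqP; rewrite subr_eq => /eqP HS H0.
rewrite mulrA H0 mulrDl -scalerAl -[X0 * a0 * P]mulrA HS mulrDr scalerDr.
have E : phi *: (X0 * (Phi%:A * P * a0)) = (phi * Phi)%:A * (X0 * P) * a0.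
  rewrite !mulr_algl -scalerAl -scalerAr scalerA -scalerAl; congr (_ *: _).
  by rewrite mulrA.
by rewrite E addrAC addrK addrC.
Qed.

Lemma term_alg (R : realType) (A : algType R[i]) (X0 Dd Ff P : A) (b : bool)
  (c sh phi Pi : R[i]) :
  (forall x, Dd * x = x * Dd) ->
  X0 * Ff = sh%:A * Ff * X0 ->
  phi *: (X0 * (Dd * b%:R * c%:A * Ff * Pi%:A * P)) =
  Dd * b%:R * c%:A * Ff * (phi * sh * Pi)%:A * (X0 * P).
Proof.
move=> HD H; case: b; last by rewrite !(mulr0, mul0r, scaler0).
rewrite mulr1 !mulr_algr -!scalerAl -!scalerAr !scalerA.
rewrite mulr_algl -scalerAl in H.
rewrite !mulrA -(HD X0) -[Dd * X0 * Ff]mulrA H -scalerAr -!scalerAl scalerA.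
congr (_ *: _); last by rewrite !mulrA.
change (phi * (Pi * c) * sh = (phi * sh) * (Pi * c)); ring.
Qed.

Lemma prod_lt_recl (R : comRingType) n (P : pred 'I_n.+1) (m0 : 'I_n) (G : 'I_n.+1 -> R) :
  \prod_(m < n.+1 | P m && (m < lift ord0 m0)%N) G m =
  (if P ord0 then G ord0 else 1) * \prod_(m < n | P (lift ord0 m) && (m < m0)%N) G (lift ord0 m).
Proof.
rewrite bigrecl_cond /= andbT; congr (_ * _); apply: eq_bigl => i.

Qed.

Lemma prod_lt0 (R : comRingType) n (P : pred 'I_n.+1) (G : 'I_n.+1 -> R) :
  \prod_(m < n.+1 | P m && (m < @ord0 n)%N) G m = 1.
Proof. by rewrite big_pred0 // => i; rewrite andbF. Qed.

Lemma prod_neq_recl (R : realType) (A : algType R[i]) n (m0 : 'I_n) (G : 'I_n.+1 -> A) :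
  \prod_(m < n.+1 | m != lift ord0 m0) G m = G ord0 * \prod_(m < n | m != m0) G (lift ord0 m).
Proof.
rewrite bigrecl_cond neq_lift; congr (_ * _); apply: eq_bigl => i.

Qed.

Lemma prod_neq0 (R : realType) (A : algType R[i]) n (G : 'I_n.+1 -> A) :
  \prod_(m < n.+1 | m != ord0) G m = \prod_(m < n) G (lift ord0 m).
Proof.
rewrite bigrecl_cond eqxx /= mul1r; apply: eq_bigl => i.
by [].
Qed.

End Helpers.
Import Helpers.


Theorem lemma2 (R : realType) (A : algType R[i]) (Q : vec R -> A)
  (F : (vec R -> R[i]) -> A) (a ad : 'I_3 -> vec R -> A)
  (D : vec R -> vec R -> A) (HA : ccr_model Q F a ad D)
  (lam : R) (Hlam : 0 < lam) (N : nat)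
  (eps : 'I_N -> bool) (ts : 'I_N -> R) (ks : 'I_N -> vec R) (js : 'I_N -> 'I_3)
  (t : R) (k : vec R) (j : 'I_3) :
  alam Q F a lam t k j
    * (\prod_(m < N) aeps Q F a ad (eps m) lam (ts m) (ks m) (js m))
  - ((\prod_(m < N | ~~ eps m) qlinv lam (t - ts m) (dotv k (ks m)))
     * (\prod_(m < N | eps m) ql lam (t - ts m) (dotv k (ks m))))%:A
    * (\prod_(m < N) aeps Q F a ad (eps m) lam (ts m) (ks m) (js m))
    * alam Q F a lam t k j
  = \sum_(m0 < N | eps m0)
      D k (ks m0) * (j == js m0)%:R * (cR (lam ^+ 2)^-1)%:A
      * F (fun p => ql lam (t - ts m0) (omt k + dotv k p))
      * ((\prod_(m < N | ~~ eps m && (m < m0)%N) ql lam (t - ts m0) (dotv k (ks m)))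
         * (\prod_(m < N | eps m && (m < m0)%N) qlinv lam (t - ts m0) (dotv k (ks m)))
         * (\prod_(m < N | ~~ eps m && (m < m0)%N) qlinv lam (t - ts m) (dotv k (ks m)))
         * (\prod_(m < N | eps m && (m < m0)%N) ql lam (t - ts m) (dotv k (ks m))))%:A
      * (\prod_(m < N | m != m0) aeps Q F a ad (eps m) lam (ts m) (ks m) (js m)).
Proof.
elim: N eps ts ks js => [|N IH] eps ts ks js.
  by rewrite !big_ord0 ?mulr1 ?scale1r ?mulr1 ?mul1r subrr.
have IH' := IH (fun m => eps (lift ord0 m)) (fun m => ts (lift ord0 m))
  (fun m => ks (lift ord0 m)) (fun m => js (lift ord0 m)).
rewrite phiprod in IH'; rewrite phiprod !big_ord_recl.
rewrite (step_alg IH' (L1 HA lam t (ts ord0) k (ks ord0) j (js ord0) (eps ord0))).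
rewrite bigrecl_cond; congr (_ + _).
  case: (eps ord0); last by rewrite mul0r.
  by rewrite !prod_lt0 prod_neq0 !mulr1 scale1r mulr1.
rewrite mulr_sumr scaler_sumr; apply: eq_bigr => m0 _.
rewrite !prod_lt_recl prod_neq_recl.
rewrite (term_alg _ _ _ _ _ (Dcentral HA _ _) (L2 HA lam (t - ts (lift ord0 m0)) (ts ord0) k (ks ord0) (js ord0) (eps ord0))).
congr (_ * _%:A * _); case: (eps ord0) => /=; ring.
Qed.
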